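(* Let $A$ be a domain which satisfies the ascending chain condition on completely prime ideals (every ascending chain of completely prime ideals of $A$ stabilizes). Then $A$ is Hopfian.
   Context: A two-sided ideal $P$ of $A$ is \emph{completely prime} if $A/P$ is a domain. A ring $A$ is \emph{Hopfian} if $A$ is not isomorphic (as a ring) to $A/J$ for any nonzero two-sided ideal $J \triangleleft A$. *)

(* Defs.v *)
From HB Require Import structures.
From mathcomp Require Import all_boot all_order all_algebra.
Set Implicit Arguments. Unset Strict Implicit. Unset Printing Implicit Defensive.
Import GRing.Theory.
Local Open Scope ring_scope.

Definition is_domain (R : pzRingType) : Prop :=
  (1 : R) <> 0 /\ forall x y : R, x * y = 0 -> x = 0 \/ y = 0.

Definition two_sided_ideal (A : pzRingType) (J : A -> Prop) : Prop :=
  [/\ J 0,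
      (forall x y, J x -> J y -> J (x + y)),
      (forall x, J x -> J (- x)),
      (forall a x, J x -> J (a * x)) &
      (forall a x, J x -> J (x * a))].

(* (R, pi) is a presentation of the quotient ring A/J: pi is a surjective
   ring morphism whose kernel is exactly J. *)
Definition is_quotient_by (A : pzRingType) (J : A -> Prop)
    (R : pzRingType) (pi : {rmorphism A -> R}) : Prop :=
  (forall r : R, exists a : A, pi a = r) /\ (forall x : A, pi x = 0 <-> J x).

Definition completely_prime (A : pzRingType) (P : A -> Prop) : Prop :=
  two_sided_ideal P /\
  exists (R : pzRingType) (pi : {rmorphism A -> R}),
    @is_quotient_by A P R pi /\ is_domain R.

Definition acc_completely_prime (A : pzRingType) : Prop :=
  forall P : nat -> (A -> Prop),
    (forall n, completely_prime (P n)) ->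
    (forall n x, P n x -> P n.+1 x) ->
    exists N : nat, forall n, (N <= n)%N -> forall x, P n x <-> P N x.

Definition ring_isomorphic (A R : pzRingType) : Prop :=
  exists f : {rmorphism A -> R}, bijective f.

Definition hopfian (A : pzRingType) : Prop :=
  forall J : A -> Prop, two_sided_ideal J -> (exists x, J x /\ x <> 0) ->
  ~ exists (R : pzRingType) (pi : {rmorphism A -> R}),
      @is_quotient_by A J R pi /\ ring_isomorphic A R.

(* Main.v *)
Require Import Defs.
From HB Require Import structures.
From mathcomp Require Import all_boot all_order all_algebra.
Set Implicit Arguments. Unset Strict Implicit. Unset Printing Implicit Defensive.
Import GRing.Theory.
Local Open Scope ring_scope.

Section Iter.
Variables (A R : pzRingType) (pi : {rmorphism A -> R}) (f : {rmorphism A -> R}) (g : R -> A).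
Hypotheses (fK : cancel f g) (gK : cancel g f).

Definition phi (x : A) : A := g (pi x).

Lemma g_sub a b : g (a - b) = g a - g b.
Proof. by apply: (can_inj fK); rewrite rmorphB !gK. Qed.
Lemma g_mul a b : g (a * b) = g a * g b.
Proof. by apply: (can_inj fK); rewrite rmorphM !gK. Qed.
Lemma g_1 : g 1 = 1.
Proof. by apply: (can_inj fK); rewrite rmorph1 !gK. Qed.

Definition phin (n : nat) (x : A) : A := iter n phi x.

Lemma phin_sub n a b : phin n (a - b) = phin n a - phin n b.
Proof. rewrite /phin; elim: n => [|n IH] //=; by rewrite IH /phi rmorphB g_sub. Qed.
Lemma phin_mul n a b : phin n (a * b) = phin n a * phin n b.
Proof. rewrite /phin; elim: n => [|n IH] //=; by rewrite IH /phi rmorphM g_mul. Qed.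
Lemma phin_1 n : phin n 1 = 1.
Proof. rewrite /phin; elim: n => [|n IH] //=; by rewrite IH /phi rmorph1 g_1. Qed.

End Iter.
Definition phin' (A R : pzRingType) (pi f : {rmorphism A -> R}) (g : R -> A)
  (fK : cancel f g) (gK : cancel g f) n := phin pi g n.
Section Inst.
Variables (A R : pzRingType) (pi f : {rmorphism A -> R}) (g : R -> A)
  (fK : cancel f g) (gK : cancel g f) (n : nat).
HB.instance Definition _ := GRing.isZmodMorphism.Build A A (phin' pi fK gK n) (phin_sub pi fK gK n).
HB.instance Definition _ := GRing.isMonoidMorphism.Build A A (phin' pi fK gK n) (phin_1 pi fK gK n, phin_mul pi fK gK n).
End Inst.

Theorem mainTheorem3 (A : pzRingType) :
  is_domain A -> acc_completely_prime A -> hopfian A.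
Proof.
move=> dA acc J idJ [x0 [Jx0 x0n0]] [R [pi [[pisurj piker] [f fbij]]]].
case: fbij => g fK gK.
set P := fun n (x : A) => phin' pi fK gK n x = 0.
have surjn : forall n (y : A), exists z, phin pi g n z = y.
  elim=> [|n IH] y; first by exists y.
  have [w <-] := IH y.
  have [z pz] := pisurj (f w).
  exists z; rewrite /phin iterSr /= /phi pz fK.
  by [].
have Pn : forall n, completely_prime (P n).
  move=> n; split.
    rewrite /P; split.
    - exact: rmorph0.
    - by move=> x y px py; rewrite rmorphD /= px py addr0.
    - by move=> x px; rewrite rmorphN /= px oppr0.
    - by move=> a x px; rewrite rmorphM /= px mulr0.
    - by move=> a x px; rewrite rmorphM /= px mul0r.
  exists A, (phin' pi fK gK n : {rmorphism A -> A}); split => //.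
  by split => //; exact: surjn.
have chain : forall n x, P n x -> P n.+1 x.
  move=> n x; rewrite /P /phin' /phin iterS => ->.
  by rewrite /phi rmorph0 -(rmorph0 f) fK.
have [N HN] := acc P Pn chain.
have [y hy] := surjn N x0.
have : P N.+1 y.
  rewrite /P /phin' /phin iterS; rewrite /phin in hy; rewrite hy /phi.
  have -> : pi x0 = 0 by apply/piker.
  by rewrite -(rmorph0 f) fK.
by move/(HN N.+1 (leqnSn N)); rewrite /P /phin' hy.
Qed.
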